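(* Let $F$ be a signature on a finite set $V$ that is non-degenerate, but such that every pinning $F_p$ with $\mathrm{dom}(p)\ne\emptyset$ is degenerate. Then either $|V|=2$, or $\mathrm{supp}(F)=\{x,\overline x\}$ for some configuration $x$.
   Context: A signature on $V$ is a function $F:\{0,1\}^V\to\mathbb{R}_{\ge0}$; $\mathrm{supp}(F)=\{x:F(x)\ne0\}$. $F$ is degenerate if it is a product $F(x)=\prod_{v\in V}U_v(x_v)$ of functions of single variables (equivalently, up to renaming, a tensor product of signatures of arity at most one). A partial configuration $p$ is an element of $\{0,1\}^{\mathrm{dom}(p)}$, $\mathrm{dom}(p)\subseteq V$; the pinning $F_p$ on $V\setminus\mathrm{dom}(p)$ is $F_p(x)=F(x,p)$. $\overline x_i=1-x_i$. *)

(* Defs.v *)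
From HB Require Import structures.
From mathcomp Require Import all_boot all_order all_algebra.
Set Implicit Arguments. Unset Strict Implicit. Unset Printing Implicit Defensive.
Import Order.TTheory GRing.Theory Num.Theory.
Local Open Scope ring_scope.

(* A configuration on V is a 0/1 assignment; a signature is F : config V -> R. *)
Definition config (V : finType) := {ffun V -> bool}.

Definition cconf (V : finType) (x : config V) : config V := [ffun v => ~~ x v].

Definition supp (V : finType) (R : numDomainType) (F : config V -> R) : {set config V} :=
  [set x | F x != 0].

(* A signature G whose variables are the elements of A (a function of the full
   configuration that only depends on the coordinates in A) is degenerate if it
   is a product of unary functions of the variables in A (up to a constant
   factor, i.e. an arity-0 signature; this only matters when A is empty). *)
Definition degenerate_on (V : finType) (R : numDomainType) (A : {set V})
    (G : config V -> R) : Prop :=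
  exists (c : R) (U : V -> bool -> R),
    forall x : config V, G x = c * \prod_(v in A) U v (x v).

Definition degenerate (V : finType) (R : numDomainType) (F : config V -> R) : Prop :=
  degenerate_on [set: V] F.

(* pinning by the partial configuration p with domain D: the coordinates in D
   are fixed to p, the remaining coordinates (in ~: D) are free. *)
Definition pin (V : finType) (R : numDomainType) (D : {set V}) (p : V -> bool)
    (F : config V -> R) : config V -> R :=
  fun x => F [ffun v => if v \in D then p v else x v].

(* Main.v *)
Require Import Defs.
From HB Require Import structures.
From mathcomp Require Import all_boot all_order all_algebra.
From mathcomp Require Import ring.
Import Order.TTheory GRing.Theory Num.Theory.
Local Open Scope ring_scope.

Definition upd {V : finType} (D : {set V}) (b : bool) (x : config V) : config V :=
  [ffun t => if t \in D then b else x t].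

Definition Gp {R : rcfType} {V : finType} (F : config V -> R) (v : V) (b : bool)
  (x : config V) : R := F (upd [set v] b x).

Lemma upd_E {V : finType} (D : {set V}) b x t : upd D b x t = if t \in D then b else x t.
Proof. by rewrite ffunE. Qed.

Lemma upd_self {V : finType} (v : V) (x : config V) : upd [set v] (x v) x = x.
Proof. apply/ffunP => t; rewrite ffunE in_set1; by case: eqP => [->|]. Qed.

Lemma upd_comm {V : finType} (w v : V) b (z : config V) e :
  w != v -> z w = e -> upd [set w] e (upd [set v] b z) = upd [set v] b z.
Proof.
move=> wv ze; apply/ffunP => t; rewrite !ffunE !in_set1.
case: (eqVneq t w) => [->|] //; by rewrite (negbTE wv) ze.
Qed.

Lemma exch {R : rcfType} {V : finType} {A : {set V}} {G : config V -> R} :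
  degenerate_on A G -> forall x y x' y' : config V,
  (forall u, (x' u = x u /\ y' u = y u) \/ (x' u = y u /\ y' u = x u)) ->
  G x * G y = G x' * G y'.
Proof.
case=> c [U HG] x y x' y' Hc.
rewrite !HG mulrACA [RHS]mulrACA -!big_split /=.
congr (_ * _); apply: eq_bigr => u _.
by case: (Hc u) => [[-> ->]|[-> ->]] //; rewrite mulrC.
Qed.

Lemma DEG {R : rcfType} {V : finType} (F : config V -> R) (v : V) (a : bool -> R) (c : R)
  (U : V -> bool -> R) :
  (forall x, F x = a (x v) * (c * \prod_(u in ~: [set v]) U u (x u))) -> degenerate F.
Proof.
move=> HF; exists c, (fun u b => if u == v then a b else U u b) => x.
rewrite HF [in RHS](bigD1 v) ?inE //= eqxx mulrCA; congr (_ * (_ * _)).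
apply: eq_big => [u|u]; first by rewrite !inE.
by rewrite !inE => /negbTE ->.
Qed.

Lemma split_upd {R : rcfType} {V : finType} {T : {set V}} (U : V -> bool -> R) (e : bool)
  (z : config V) {u : V} : u \in T ->
  \prod_(t in T) U t (upd [set u] e z t) = U u e * \prod_(t in T | t != u) U t (z t).
Proof.
move=> uT; rewrite (bigD1 u uT) /= upd_E in_set1 eqxx; congr (_ * _).
by apply: eq_bigr => t /andP[_ tu]; rewrite upd_E in_set1 (negbTE tu).
Qed.

Lemma cancel4 {R : rcfType} {c0 c1 a a' b b' KA KB : R} :
  c0 * (a * KA) != 0 -> c1 * (b * KB) != 0 ->
  c0 * (a' * KA) * (c1 * (b * KB)) = c0 * (a * KA) * (c1 * (b' * KB)) -> a' * b = a * b'.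
Proof.
move=> h0 h1 E.
have nz : c0 * KA * (c1 * KB) != 0.
  move: h0 h1; rewrite !mulf_eq0 !negb_or => /and3P[c0n _ KAn] /and3P[c1n _ KBn].
  by rewrite c0n KAn c1n KBn.
apply: (mulfI nz).
transitivity (c0 * (a' * KA) * (c1 * (b * KB))); first by ring.
rewrite E; ring.
Qed.

Theorem mainTheorem10 (R : rcfType) (V : finType) (F : config V -> R)
    (Fnn : forall x, 0 <= F x)
    (Fnd : ~ degenerate F)
    (Fpin : forall (D : {set V}) (p : V -> bool),
              D != set0 -> degenerate_on (~: D) (pin D p F)) :
  #|V| = 2%N \/ exists x : config V, supp F = [set x; cconf x].
Proof.
have Hsetv : forall v : V, [set v] != set0.
  by move=> v; apply/set0Pn; exists v; rewrite inE.
case: (eqVneq #|V| 2) => [->|n2]; first by left.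
right.
case: (pickP (fun _ : V => true)) => [v _ | V0]; last first.
  exfalso; apply: Fnd; exists (F [ffun _ => false]), (fun _ _ => 1) => x.
  rewrite big1 // mulr1; congr F; apply/ffunP => t; by have := V0 t.
have H3 : forall u, u != v -> exists w, (w != v) && (w != u).
  move=> u uv; case: (pickP (fun w => (w != v) && (w != u))) => [w Hw | none].
    by exists w.
  exfalso; move/eqP: n2; apply.
  have E : [set: V] = [set v; u].
    apply/setP => w; rewrite !inE; have := none w.
    by case: (w == v); case: (w == u).
  by rewrite -cardsT E cards2 eq_sym uv.
have [c0 [A HA]] := Fpin [set v] (fun _ => false) (Hsetv v).
have [c1 [B HB]] := Fpin [set v] (fun _ => true) (Hsetv v).
have HA' : forall x, Gp F v false x = c0 * \prod_(u in ~: [set v]) A u (x u) by exact: HA.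
have HB' : forall x, Gp F v true x = c1 * \prod_(u in ~: [set v]) B u (x u) by exact: HB.
clear HA HB.
have HF : forall x, F x = Gp F v (x v) x by move=> x; rewrite /Gp upd_self.
have Xw : forall w (y y' : config V), w != v -> y w = y' w ->
    Gp F v false y * Gp F v true y' = Gp F v false y' * Gp F v true y.
  move=> w y y' wv eyw; have eyw' := esym eyw.
  have Cd : forall t, (upd [set v] true y t = upd [set v] false y t /\
                      upd [set v] false y' t = upd [set v] true y' t) \/
                     (upd [set v] true y t = upd [set v] true y' t /\
                      upd [set v] false y' t = upd [set v] false y t).
    by move=> t; rewrite !upd_E !in_set1; case: (t == v); [right|left].
  have E := exch (Fpin [set w] (fun _ => y w) (Hsetv w)) _ _ _ _ Cd.
  have P : forall e (x : config V), pin [set w] (fun _ => e) F x = F (upd [set w] e x) by [].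
  rewrite !P !upd_comm // in E.
  by rewrite /Gp E mulrC.
case: (pickP (fun z => Gp F v false z != 0)) => [z0 Hz0 | G0zero]; last first.
  exfalso; apply: Fnd; apply: (DEG F v (fun b => if b then 1 else 0) c1 B).
  move=> x; rewrite HF; case: (x v) => /=; first by rewrite mul1r HB'.
  by rewrite mul0r; apply/eqP; move: (G0zero x) => /negbFE.
case: (pickP (fun z => Gp F v true z != 0)) => [z1 Hz1 | G1zero]; last first.
  exfalso; apply: Fnd; apply: (DEG F v (fun b => if b then 0 else 1) c0 A).
  move=> x; rewrite HF; case: (x v) => /=; last by rewrite mul1r HA'.
  by rewrite mul0r; apply/eqP; move: (G1zero x) => /negbFE.
case: (pickP (fun z => (Gp F v false z != 0) && (Gp F v true z != 0))) =>
   [z /andP[zz0 zz1] | nocommon].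
  exfalso.
  have det : forall u, u \in ~: [set v] -> forall a b, A u a * B u b = A u b * B u a.
    move=> u uT.
    have uv : u != v by move: uT; rewrite !inE.
    have [w /andP[wv wu]] := H3 u uv.
    have ez' : upd [set u] (~~ z u) z w = z w by rewrite upd_E in_set1 (negbTE wu).
    have SE := Xw w _ z wv ez'.
    rewrite !HA' !HB' (split_upd A (~~ z u) z uT) (split_upd B (~~ z u) z uT) in SE.
    rewrite (bigD1 u uT) /= (bigD1 u uT) /= in SE.
    have z0' := zz0; have z1' := zz1.
    rewrite HA' (bigD1 u uT) /= in z0'.
    rewrite HB' (bigD1 u uT) /= in z1'.
    have key := cancel4 z0' z1' SE.
    move: key; case: (z u) => /= key a b; case: a; case: b => //;
      first [by rewrite key | by rewrite -key].
  have RT : forall y : config V, Gp F v false y * Gp F v true z = Gp F v false z * Gp F v true y.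
    move=> y; rewrite !HA' !HB'.
    have E : (\prod_(t in ~: [set v]) A t (y t)) * (\prod_(t in ~: [set v]) B t (z t)) =
             (\prod_(t in ~: [set v]) A t (z t)) * (\prod_(t in ~: [set v]) B t (y t)).
      by rewrite -!big_split; apply: eq_bigr => t tT; exact: (det t tT).
    by rewrite mulrACA E mulrACA.
  apply: Fnd.
  apply: (DEG F v (fun b => if b then Gp F v true z / Gp F v false z else 1) c0 A).
  move=> x; rewrite HF; case: (x v) => /=; last by rewrite mul1r HA'.
  rewrite -HA'; have RTx := RT x.
  apply: (mulIf zz0); rewrite mulrAC divfK // mulrC -RTx mulrC //.
have Q : forall w (y y' : config V), w != v -> y w = y' w -> Gp F v false y != 0 ->
    Gp F v true y' != 0 -> False.
  move=> w y y' wv e n0 n1; have X := Xw w y y' wv e.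
  have : Gp F v false y' * Gp F v true y != 0 by rewrite -X mulf_neq0.
  rewrite mulf_eq0 negb_or => /andP[a _].
  by have := nocommon y'; rewrite a n1.
have zc : forall u, u != v -> z1 u = ~~ z0 u.
  move=> u uv; move: (Q u z0 z1 uv); case: (z0 u); case: (z1 u) => //= H;
    by case: (H erefl Hz0 Hz1).
exists (upd [set v] false z0).
have hx' : cconf (upd [set v] false z0) = upd [set v] true z1.
  apply/ffunP => t; rewrite /cconf !ffunE !in_set1.
  by case: eqVneq => [_|tv] //=; rewrite zc.
apply/setP => y; rewrite /supp !inE hx'.
apply/idP/idP.
  move=> Fy; rewrite HF in Fy; move: Fy; case E: (y v) => Fy.
    apply/orP; right; apply/eqP/ffunP => t; rewrite upd_E in_set1.
    case: eqVneq => [->|tv] //.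
    move: (Q t z0 y tv); rewrite (zc t tv); case: (y t); case: (z0 t) => //= H;
      by case: (H erefl Hz0 Fy).
  apply/orP; left; apply/eqP/ffunP => t; rewrite upd_E in_set1.
  case: eqVneq => [->|tv] //.
  move: (Q t y z1 tv); rewrite (zc t tv); case: (y t); case: (z0 t) => //= H;
    by case: (H erefl Fy Hz1).
by case/orP => /eqP ->.
Qed.
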